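(* Consider a word $uaav$ with $a \in A$ and $|ua| = i$. Then $x_i \neq x_{i+1}$ and $y_i \neq y_{i+1}$.
   Context: $A$ is a finite alphabet. An $\mathsf{X}$-ranker is a nonempty word over $\{\mathsf{X}_a : a\in A\}$ (''go to the next $a$-position'', starting with the first $a$-position) and a $\mathsf{Y}$-ranker a nonempty word over $\{\mathsf{Y}_a : a\in A\}$ (''go to the previous $a$-position'', starting with the last $a$-position). The attribute of position $i$ is $(x_i,y_i)$, where $x_i$ (resp. $y_i$) is the length of a shortest $\mathsf{X}$-ranker (resp. $\mathsf{Y}$-ranker) reaching $i$. *)

(* Defs.v *)
From mathcomp Require Import all_boot.
From Stdlib Require Import ClassicalEpsilon.
Set Implicit Arguments. Unset Strict Implicit. Unset Printing Implicit Defensive.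

Section Rankers.
Variable A : finType.

(* Positions of a word w are 1, ..., size w; letter at position j is nth _ w j.-1.
   Virtual start positions: 0 for X-rankers, (size w).+1 for Y-rankers. *)

Definition Xnext (w : seq A) (b : A) (p : nat) : option nat :=
  let s := drop p w in
  let k := find (pred1 b) s in
  if k < size s then Some (p + k).+1 else None.

Definition Ynext (w : seq A) (b : A) (p : nat) : option nat :=
  let s := rev (take p.-1 w) in
  let k := find (pred1 b) s in
  if k < size s then Some (p.-1 - k) else None.

(* Apply the ranker letters left to right. X_b is represented by b. *)
Definition Xrun (w : seq A) (r : seq A) : option nat :=
  foldl (fun o b => obind (Xnext w b) o) (Some 0) r.
Definition Yrun (w : seq A) (r : seq A) : option nat :=
  foldl (fun o b => obind (Ynext w b) o) (Some (size w).+1) r.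

Definition Xreach (w : seq A) (i n : nat) : bool :=
  [exists t : n.-tuple A, (0 < n) && (Xrun w t == Some i)].
Definition Yreach (w : seq A) (i n : nat) : bool :=
  [exists t : n.-tuple A, (0 < n) && (Yrun w t == Some i)].

(* Attribute (x_i, y_i): length of a shortest ranker reaching i
   (default 0 if none reaches i, which never happens for valid positions). *)
Definition xattr (w : seq A) (i : nat) : nat :=
  match excluded_middle_informative (exists n, Xreach w i n) with
  | left H => ex_minn H
  | right _ => 0
  end.
Definition yattr (w : seq A) (i : nat) : nat :=
  match excluded_middle_informative (exists n, Yreach w i n) with
  | left H => ex_minn H
  | right _ => 0
  end.
End Rankers.

(* Main.v *)
Require Import Defs.
From mathcomp Require Import all_boot.
From mathcomp Require Import zify.
From Stdlib Require Import ClassicalEpsilon.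
Set Implicit Arguments. Unset Strict Implicit. Unset Printing Implicit Defensive.

Section Aux.
Variable A : finType.
Implicit Types (w r : seq A) (b : A).

Lemma Xrun_rcons w r b : Xrun w (rcons r b) = obind (Xnext w b) (Xrun w r).
Proof. by rewrite /Xrun foldl_rcons. Qed.
Lemma Yrun_rcons w r b : Yrun w (rcons r b) = obind (Ynext w b) (Yrun w r).
Proof. by rewrite /Yrun foldl_rcons. Qed.

Lemma Xrun_prefix w p s : w = p ++ s -> Xrun w p = Some (size p).
Proof.
elim/last_ind: p s => [|p x IH] s e //.
rewrite Xrun_rcons (IH (x :: s)); last by rewrite e cat_rcons.
rewrite /= /Xnext e -cats1 -catA (drop_size_cat (x :: s)) //= eqxx /= size_cat /=; congr Some; lia.
Qed.

Lemma Yrun_suffix w s p : w = p ++ s -> Yrun w (rev s) = Some (size p).+1.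
Proof.
elim: s p => [|x s IH] p e.
  by rewrite /Yrun /= e cats0.
rewrite rev_cons Yrun_rcons (IH (rcons p x)); last by rewrite e cat_rcons.
rewrite /= /Ynext /= e -cat_rcons (take_size_cat s) // rev_rcons /= eqxx /= size_rcons subn0.
by [].
Qed.

Lemma Ynext_lt w b p q : Ynext w b p = Some q -> q < p.
Proof.
rewrite /Ynext; case: ifP => // hk [<-].
move: hk; rewrite size_rev size_take; case: ifP => hl; move: hl; lia.
Qed.

Lemma Yrun_bound w r q : Yrun w r = Some q -> q <= (size w).+1.
Proof.
elim/last_ind: r q => [|r b IH] q; first by case=> <-.
rewrite Yrun_rcons; case e: (Yrun w r) => [p|] //= /Ynext_lt.
have := IH _ e; lia.
Qed.

Lemma Xreach_seq w r j : 0 < size r -> Xrun w r = Some j -> Xreach w j (size r).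
Proof. by move=> h e; apply/existsP; exists (in_tuple r); rewrite h /= e. Qed.
Lemma Yreach_seq w r j : 0 < size r -> Yrun w r = Some j -> Yreach w j (size r).
Proof. by move=> h e; apply/existsP; exists (in_tuple r); rewrite h /= e. Qed.

Lemma xattr_spec w i : (exists n, Xreach w i n) ->
  Xreach w i (xattr w i) /\ forall m, Xreach w i m -> xattr w i <= m.
Proof.
move=> H; rewrite /xattr; case: excluded_middle_informative => // H'.
by case: ex_minnP.
Qed.
Lemma yattr_spec w i : (exists n, Yreach w i n) ->
  Yreach w i (yattr w i) /\ forall m, Yreach w i m -> yattr w i <= m.
Proof.
move=> H; rewrite /yattr; case: excluded_middle_informative => // H'.
by case: ex_minnP.
Qed.

Lemma Xreach_pos w i n : Xreach w i n -> 0 < n.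
Proof. by case/existsP => t /andP[]. Qed.
Lemma Yreach_pos w i n : Yreach w i n -> 0 < n.
Proof. by case/existsP => t /andP[]. Qed.

Variables (w : seq A) (a : A) (j : nat).
Hypotheses (h1 : nth a w j = a) (h2 : nth a w j.+1 = a) (hs : j.+1 < size w).

Lemma Xnext_key b p : Xnext w b p = Some j.+2 -> p = j.+1.
Proof.
rewrite /Xnext; case: ifP => // hk [] e.
have hb := nth_find a (_ : has (pred1 b) (drop p w)).
rewrite has_find in hb; have {hb} := hb hk.
rewrite nth_drop /= (_ : p + _ = j.+1); last by lia.
rewrite h2 => /eqP hb; subst b.
case: (ltnP p j.+1) => hp; last by lia.
have := @before_find _ a (pred1 a) (drop p w) (j - p).
rewrite nth_drop (_ : p + (j - p) = j); last by lia.
rewrite h1 /= eqxx => H; have // := H ltac:(lia).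
Qed.

Lemma Ynext_key b p : p <= (size w).+1 -> Ynext w b p = Some j.+1 -> p = j.+2.
Proof.
move=> hp; rewrite /Ynext; case: ifP => // hk [] e.
have sz : size (rev (take p.-1 w)) = p.-1.
  rewrite size_rev size_take; case: ifP => hl; move: hl hp; lia.
have sz' : size (take p.-1 w) = p.-1 by move: sz; rewrite size_rev.
rewrite sz in hk.
have hb := nth_find a (_ : has (pred1 b) (rev (take p.-1 w))).
rewrite has_find sz in hb; have {hb} := hb hk.
rewrite nth_rev; last by rewrite sz'.
rewrite sz' nth_take; last by lia.
set k := find (pred1 b) _ in e hk *; rewrite (_ : p.-1 - k.+1 = j); last by lia.
rewrite h1 => /eqP hb; subst b.
case: (ltnP j.+2 p) => hp2; last by lia.
have := @before_find _ a (pred1 a) (rev (take p.-1 w)) (p.-1 - j.+2).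
rewrite nth_rev; last by rewrite sz'; lia.
rewrite sz' nth_take; last by lia.
rewrite (_ : p.-1 - (p.-1 - j.+2).+1 = j.+1); last by lia.
rewrite h2 /= eqxx => H.
suff : p.-1 - j.+2 < k by move/H.
lia.
Qed.

Lemma Xstep r : Xrun w r = Some j.+2 ->
  exists r', [/\ size r' = (size r).-1, 0 < size r' & Xrun w r' = Some j.+1].
Proof.
case/lastP: r => [|r b]; first by [].
rewrite Xrun_rcons; case e: (Xrun w r) => [p|] //= /Xnext_key hp; subst p.
exists r; split => //; first by rewrite size_rcons.
by case: r e => // [[]].
Qed.

Lemma Ystep r : Yrun w r = Some j.+1 ->
  exists r', [/\ size r' = (size r).-1, 0 < size r' & Yrun w r' = Some j.+2].
Proof.
case/lastP: r => [|r b]; first by case=> e; lia.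
rewrite Yrun_rcons; case e: (Yrun w r) => [p|] //= /(Ynext_key (Yrun_bound e)) hp.
subst p; exists r; split => //; first by rewrite size_rcons.
by case: r e => // [[]] e; lia.
Qed.

End Aux.

Theorem lemma19 (A : finType) (u v : seq A) (a : A) (i : nat) :
  i = size (u ++ [:: a]) ->
  xattr (u ++ a :: a :: v) i <> xattr (u ++ a :: a :: v) i.+1 /\
  yattr (u ++ a :: a :: v) i <> yattr (u ++ a :: a :: v) i.+1.
Proof.
rewrite size_cat addn1 => ->.
set w := u ++ a :: a :: v.
have h1 : nth a w (size u) = a by rewrite /w nth_cat ltnn subnn.
have h2 : nth a w (size u).+1 = a by rewrite /w nth_cat ltnNge leqnSn /= subSnn.
have hs : (size u).+1 < size w by rewrite /w size_cat /=; lia.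
split.
- have ex2 : exists n, Xreach w (size u).+2 n.
    exists (size (u ++ [:: a; a])); apply: Xreach_seq; first by rewrite size_cat addn2.
    rewrite (Xrun_prefix (s := v)); first by rewrite size_cat addn2.
    by rewrite /w -catA.
  have [R2 M2] := xattr_spec ex2.
  case/existsP: R2 => t /andP[pos /eqP e].
  have [r' [sr pr er]] := Xstep h1 h2 hs e.
  have := Xreach_seq pr er.
  rewrite sr size_tuple => R1.
  have [_ M1] := xattr_spec (ex_intro (fun n => Xreach w _ n) _ R1).
  have := M1 _ R1; lia.
- have ex1 : exists n, Yreach w (size u).+1 n.
    exists (size (rev (a :: a :: v))); apply: Yreach_seq; first by rewrite size_rev.
    exact: (Yrun_suffix (p := u)).
  have [R1 M1] := yattr_spec ex1.
  case/existsP: R1 => t /andP[pos /eqP e].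
  have [r' [sr pr er]] := Ystep h1 h2 hs e.
  have := Yreach_seq pr er.
  rewrite sr size_tuple => R2.
  have [_ M2] := yattr_spec (ex_intro (fun n => Yreach w _ n) _ R2).
  have := M2 _ R2; lia.
Qed.
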